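(* Let $a>1$, $d\ge 4$, and let $G$ be generated by the security model $\mathcal{S}(n,a,d)$; let $T_1=\log^{a+1}n$. Then with probability $1-o(1)$: (1) every community (homochromatic set) of $G$ has size $O(\log^{a+1} n)$; and (2) for every $t\ge T_1$, every community at the end of time step $t$ has size $O(\log^{a+1} t)$.
   Context: Security model $\mathcal{S}(n,a,d)$ (homophyly exponent $a$, natural number $d$): start with an initial graph $G_2$ on two nodes, each of which is a seed node with its own distinct color. For $i=3,\dots,n$, given $G_{i-1}$, let $p_i=(\log i)^{-a}$ and create a new node $v$. With probability $p_i$, $v$ receives a brand-new color $c$ and is called the seed node of $c$; then one edge $(v,u)$ is added with $u$ chosen with probability proportional to degrees in $G_{i-1}$, and $d-1$ edges $(v,u_j)$ are added, each $u_j$ chosen uniformly at random among all seed nodes of $G_{i-1}$. Otherwise, $v$ picks a color $c$ uniformly at random among all colors present in $G_{i-1}$, takes color $c$, and $d$ edges $(v,u_j)$ are added, each $u_j$ chosen with probability proportional to degree among the nodes of color $c$ in $G_{i-1}$. The network is $G=G_n$. A homochromatic set is the set of all nodes of one color; here its size is the size of that set (at the end of the construction, or at the end of step $t$). *)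

(* Defs.v *)
From Stdlib Require Import Reals Lra List Arith ClassicalEpsilon.
Import ListNotations.
Open Scope R_scope.

Definition dist (A : Type) := list (R * A).

Definition dret {A} (x : A) : dist A := [(1, x)].

Definition dbind {A B} (m : dist A) (f : A -> dist B) : dist B :=
  flat_map (fun px => map (fun qy => (fst px * fst qy, snd qy)) (f (snd px))) m.

Definition bern (p : R) : dist bool := [(p, true); (1 - p, false)].

Definition weighted {A} (l : list (R * A)) : dist A :=
  let tot := fold_right (fun wx s => fst wx + s) 0 l in
  map (fun wx => (fst wx / tot, snd wx)) l.

Definition uniform {A} (l : list A) : dist A := weighted (map (fun x => (1, x)) l).

Fixpoint iid {A} (k : nat) (m : dist A) : dist (list A) :=
  match k with
  | O => dret []
  | S k' => dbind m (fun x => dbind (iid k' m) (fun xs => dret (x :: xs)))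
  end.

Definition prob {A} (m : dist A) (E : A -> Prop) : R :=
  fold_right (fun px s =>
    (if excluded_middle_informative (E (snd px)) then fst px else 0) + s) 0 m.

(** Nodes are 0, ..., N-1 in order of arrival; colours are 0, ..., ncol-1
    in order of creation; the graph is a multigraph given by its edge list. *)
Record state := mkState {
  ncol  : nat;
  col   : list nat;
  seedf : list bool;
  edges : list (nat * nat)
}.

Definition nnodes (G : state) : nat := length (col G).
Definition nodes (G : state) : list nat := seq 0 (nnodes G).
Definition color (G : state) (u : nat) : nat := nth u (col G) 0%nat.
Definition is_seed (G : state) (u : nat) : bool := nth u (seedf G) false.
Definition deg (G : state) (u : nat) : nat :=
  (length (filter (fun e => Nat.eqb (fst e) u) (edges G)) +
   length (filter (fun e => Nat.eqb (snd e) u) (edges G)))%nat.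

Definition class_size (G : state) (c : nat) : nat :=
  length (filter (fun u => Nat.eqb (color G u) c) (nodes G)).

Definition G2 : state := mkState 2 [0%nat; 1%nat] [true; true] [(0%nat, 1%nat)].

Definition p_i (a : R) (i : nat) : R := Rpower (ln (INR i)) (- a).

Definition add_node (G : state) (c : nat) (newcol seedv : bool) (targets : list nat) : state :=
  let v := nnodes G in
  mkState (if newcol then S (ncol G) else ncol G)
          (col G ++ [c]) (seedf G ++ [seedv])
          (edges G ++ map (fun w => (v, w)) targets).

Definition step (a : R) (d : nat) (i : nat) (G : state) : dist state :=
  dbind (bern (p_i a i)) (fun b =>
    if b then
      dbind (weighted (map (fun u => (INR (deg G u), u)) (nodes G))) (fun u =>
      dbind (iid (d - 1) (uniform (filter (is_seed G) (nodes G)))) (fun us =>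
      dret (add_node G (ncol G) true true (u :: us))))
    else
      dbind (uniform (seq 0 (ncol G))) (fun c =>
      dbind (iid d (weighted (map (fun u => (INR (deg G u), u))
                                  (filter (fun u => Nat.eqb (color G u) c) (nodes G)))))
        (fun us => dret (add_node G c false false us)))).

(** Trajectory [G_n; G_{n-1}; ...; G_2] of S(n,a,d) (head = G_n). *)
Fixpoint traj (a : R) (d : nat) (n : nat) : dist (list state) :=
  match n with
  | O => dret [G2]
  | S k => if Nat.leb k 1 then dret [G2]
           else dbind (traj a d k) (fun tr =>
                  dbind (step a d n (hd G2 tr)) (fun G => dret (G :: tr)))
  end.

Definition good (a C : R) (n : nat) (tr : list state) : Prop :=
  (forall c : nat,
     INR (class_size (hd G2 tr) c) <= C * Rpower (ln (INR n)) (a + 1)) /\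
  (forall Gt : state, In Gt tr ->
     Rpower (ln (INR n)) (a + 1) <= INR (nnodes Gt) ->
     forall c : nat,
       INR (class_size Gt c) <= C * Rpower (ln (INR (nnodes Gt))) (a + 1)).

(* Main.v *)
Require Import Defs.
From Stdlib Require Import Reals Lra Lia List Arith ClassicalEpsilon Classical ZArith.
Import ListNotations.
Open Scope R_scope.

Definition Ex {A} (m : Defs.dist A) (f : A -> R) : R :=
  fold_right (fun px s => fst px * f (snd px) + s) 0 m.
Definition mass {A} (m : Defs.dist A) := Ex m (fun _ => 1).
Definition nonneg {A} (m : Defs.dist A) := forall px, In px m -> 0 <= fst px.
Definition supp {A} (m : Defs.dist A) (x : A) := In x (map snd m).
Definition ind (P : Prop) : R := if excluded_middle_informative P then 1 else 0.

Lemma ind_nonneg P : 0 <= ind P.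
Proof. unfold ind; destruct excluded_middle_informative; lra. Qed.
Lemma ind_le1 P : ind P <= 1.
Proof. unfold ind; destruct excluded_middle_informative; lra. Qed.

Lemma prob_Ex {A} (m : Defs.dist A) E : prob m E = Ex m (fun x => ind (E x)).
Proof.
  induction m as [|[p x] m IH]; simpl; auto.
  rewrite IH; unfold ind; destruct excluded_middle_informative; ring.
Qed.

Lemma Ex_app {A} (m1 m2 : Defs.dist A) f : Ex (m1 ++ m2) f = Ex m1 f + Ex m2 f.
Proof. induction m1 as [|[p x] m IH]; simpl; [ring| rewrite IH; ring]. Qed.

Lemma Ex_scale {A B} (l : Defs.dist A) (p : R) (g : A -> B) f :
  Ex (map (fun qy => (p * fst qy, g (snd qy))) l) f = p * Ex l (fun y => f (g y)).
Proof. induction l as [|[q y] l IH]; simpl; [ring| rewrite IH; simpl; ring]. Qed.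

Lemma Ex_dbind {A B} (m : Defs.dist A) (k : A -> Defs.dist B) f :
  Ex (dbind m k) f = Ex m (fun x => Ex (k x) f).
Proof.
  unfold dbind. induction m as [|[p x] m IH]; simpl; auto.
  rewrite Ex_app, IH. f_equal.
  rewrite (Ex_scale (k x) p (fun y => y)). reflexivity.
Qed.

Lemma Ex_dret {A} (x : A) f : Ex (dret x) f = f x.
Proof. unfold dret, Ex; simpl; ring. Qed.

Lemma Ex_le {A} (m : Defs.dist A) f g : nonneg m ->
  (forall x, supp m x -> f x <= g x) -> Ex m f <= Ex m g.
Proof.
  unfold nonneg, supp; induction m as [|[p x] m IH]; simpl; intros Hn Hfg; [lra|].
  assert (0 <= p) by (apply (Hn (p,x)); auto).
  assert (f x <= g x) by (apply Hfg; auto).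
  assert (Ex m f <= Ex m g) by (apply IH; auto).
  nra.
Qed.

Lemma Ex_ext {A} (m : Defs.dist A) f g :
  (forall x, supp m x -> f x = g x) -> Ex m f = Ex m g.
Proof.
  unfold supp; induction m as [|[p x] m IH]; simpl; intros H; auto.
  rewrite H by auto. rewrite IH; auto.
Qed.

Lemma Ex_plus {A} (m : Defs.dist A) f g : Ex m (fun x => f x + g x) = Ex m f + Ex m g.
Proof. induction m as [|[p x] m IH]; simpl; [ring| rewrite IH; ring]. Qed.

Lemma Ex_mult {A} (m : Defs.dist A) c f : Ex m (fun x => c * f x) = c * Ex m f.
Proof. induction m as [|[p x] m IH]; simpl; [ring| rewrite IH; ring]. Qed.

Lemma Ex_nonneg {A} (m : Defs.dist A) f : nonneg m -> (forall x, supp m x -> 0 <= f x) -> 0 <= Ex m f.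
Proof.
  intros. replace 0 with (Ex m (fun _ => 0)).
  apply Ex_le; auto.
  clear. induction m as [|[p x] m IH]; simpl; [ring| rewrite IH; ring].
Qed.

Lemma Ex_const_le {A} (m : Defs.dist A) f v : nonneg m -> mass m <= 1 -> 0 <= v ->
  (forall x, supp m x -> f x <= v) -> Ex m f <= v.
Proof.
  intros. apply Rle_trans with (Ex m (fun _ => v)). apply Ex_le; auto.
  replace (Ex m (fun _ => v)) with (v * mass m). nra.
  unfold mass. rewrite <- Ex_mult. apply Ex_ext; intros; ring.
Qed.

Lemma nonneg_dbind {A B} (m : Defs.dist A) (k : A -> Defs.dist B) :
  nonneg m -> (forall x, supp m x -> nonneg (k x)) -> nonneg (dbind m k).
Proof.
  unfold nonneg, supp, dbind; intros Hm Hk [q y] Hin.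
  apply in_flat_map in Hin as [[p x] [Hx Hy]].
  apply in_map_iff in Hy as [[r z] [Heq Hz]]. injection Heq as <- <-. simpl.
  apply Rmult_le_pos. apply (Hm (p,x)); auto.
  apply (Hk x (proj2 (in_map_iff _ _ _) (ex_intro _ (p,x) (conj eq_refl Hx))) (r,z) Hz).
Qed.

Lemma supp_dbind {A B} (m : Defs.dist A) (k : A -> Defs.dist B) y :
  supp (dbind m k) y -> exists x, supp m x /\ supp (k x) y.
Proof.
  unfold supp, dbind; intros H. apply in_map_iff in H as [[q y'] [<- Hin]].
  apply in_flat_map in Hin as [[p x] [Hx Hy]].
  apply in_map_iff in Hy as [[r z] [Heq Hz]]. injection Heq as _ <-.
  exists x. split. apply in_map_iff; exists (p,x); auto. apply in_map_iff; exists (r,z); auto.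
Qed.

Lemma supp_dret {A} (x y : A) : supp (dret x) y -> y = x.
Proof. unfold supp, dret; simpl; intros [H|[]]; auto. Qed.

Lemma nonneg_dret {A} (x : A) : nonneg (dret x).
Proof. unfold nonneg, dret; simpl; intros px [<-|[]]; simpl; lra. Qed.

Lemma mass_dbind_le {A B} (m : Defs.dist A) (k : A -> Defs.dist B) : nonneg m -> mass m <= 1 ->
  (forall x, supp m x -> nonneg (k x) /\ mass (k x) <= 1) -> mass (dbind m k) <= 1.
Proof.
  intros Hn Hm Hk. unfold mass at 1. rewrite Ex_dbind.
  apply Ex_const_le; auto; try lra. intros x Hx. apply Hk; auto.
Qed.

Lemma mass_dbind_eq {A B} (m : Defs.dist A) (k : A -> Defs.dist B) : mass m = 1 ->
  (forall x, supp m x -> mass (k x) = 1) -> mass (dbind m k) = 1.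
Proof.
  intros Hm Hk. unfold mass at 1. rewrite Ex_dbind.
  rewrite (Ex_ext m _ (fun _ => 1)). exact Hm. intros x Hx. apply Hk; auto.
Qed.

Lemma mass_dret {A} (x : A) : mass (dret x) = 1.
Proof. unfold mass; rewrite Ex_dret; auto. Qed.

Definition tot {A} (l : list (R * A)) := fold_right (fun wx s => fst wx + s) 0 l.

Lemma Ex_weighted {A} (l : list (R * A)) f :
  Ex (weighted l) f = Ex l f * / tot l.
Proof.
  unfold weighted, tot. generalize (fold_right (fun wx s => fst wx + s) 0 l) as t.
  intros t. induction l as [|[w x] l IH]; simpl; [ring| rewrite IH; unfold Rdiv; ring].
Qed.

Lemma Ex_tot {A} (l : list (R * A)) : Ex l (fun _ => 1) = tot l.
Proof. induction l as [|[w x] l IH]; simpl; auto. rewrite IH; ring. Qed.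

Lemma tot_nonneg {A} (l : list (R * A)) : (forall wx, In wx l -> 0 <= fst wx) -> 0 <= tot l.
Proof. induction l as [|[w x] l IH]; simpl; intros H; [lra|].
  assert (0 <= w) by (apply (H (w,x)); auto). assert (0 <= tot l) by auto. lra. Qed.

Lemma tot_zero {A} (l : list (R * A)) : (forall wx, In wx l -> 0 <= fst wx) -> tot l = 0 ->
  forall wx, In wx l -> fst wx = 0.
Proof. induction l as [|[w x] l IH]; simpl; intros H H0 wx Hin; [contradiction|].
  assert (0 <= w) by (apply (H (w,x)); auto).
  assert (0 <= tot l) by (apply tot_nonneg; auto).
  destruct Hin as [<-|Hin]; simpl. lra. apply IH; auto. lra. Qed.

Lemma nonneg_weighted {A} (l : list (R * A)) : (forall wx, In wx l -> 0 <= fst wx) -> nonneg (weighted l).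
Proof.
  intros H [q y] Hin. unfold weighted in Hin. apply in_map_iff in Hin as [[w x] [Heq Hx]].
  injection Heq as <- <-. simpl. fold (tot l).
  assert (0 <= w) by (apply (H (w,x)); auto).
  destruct (Req_dec (tot l) 0) as [E|E].
  - pose proof (tot_zero l H E (w,x) Hx) as Hw. simpl in Hw. rewrite Hw. unfold Rdiv; lra.
  - assert (0 < tot l) by (pose proof (tot_nonneg l H); lra).
    apply Rmult_le_pos; auto. left; apply Rinv_0_lt_compat; auto.
Qed.

Lemma mass_weighted_le {A} (l : list (R * A)) : (forall wx, In wx l -> 0 <= fst wx) -> mass (weighted l) <= 1.
Proof.
  intros H. unfold mass. rewrite Ex_weighted, Ex_tot.
  destruct (Req_dec (tot l) 0) as [E|E]. rewrite E; lra.
  rewrite Rinv_r; auto; lra.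
Qed.

Lemma mass_weighted_eq {A} (l : list (R * A)) : tot l <> 0 -> mass (weighted l) = 1.
Proof. intros H. unfold mass. rewrite Ex_weighted, Ex_tot. field; auto. Qed.

Lemma supp_weighted {A} (l : list (R * A)) y : supp (weighted l) y -> In y (map snd l).
Proof. unfold supp, weighted. rewrite map_map. simpl. auto. Qed.

Lemma iid_facts {A} k (m : Defs.dist A) : nonneg m -> mass m <= 1 -> nonneg (iid k m) /\ mass (iid k m) <= 1.
Proof.
  intros Hn Hm. induction k as [|k IH]; cbn [iid].
  - split. apply nonneg_dret. rewrite mass_dret; lra.
  - split.
    + apply nonneg_dbind; auto. intros. apply nonneg_dbind. apply IH. intros; apply nonneg_dret.
    + apply mass_dbind_le; auto. intros. split.
      apply nonneg_dbind. apply IH. intros; apply nonneg_dret.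
      apply mass_dbind_le; try apply IH. intros; split. apply nonneg_dret. rewrite mass_dret; lra.
Qed.

Lemma iid_mass_eq {A} k (m : Defs.dist A) : mass m = 1 -> mass (iid k m) = 1.
Proof.
  intros Hm. induction k as [|k IH]; cbn [iid]. apply mass_dret.
  apply mass_dbind_eq; auto. intros. apply mass_dbind_eq; auto. intros; apply mass_dret.
Qed.

Lemma supp_iid {A} k (m : Defs.dist A) xs : supp (iid k m) xs -> length xs = k.
Proof.
  revert xs; induction k as [|k IH]; cbn [iid]; intros xs H.
  - apply supp_dret in H; subst; auto.
  - apply supp_dbind in H as [x [_ H]]. apply supp_dbind in H as [ys [Hy H]].
    apply supp_dret in H; subst; simpl; auto.
Qed.

Lemma prob_le {A} (m : Defs.dist A) (E F : A -> Prop) : nonneg m ->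
  (forall x, supp m x -> E x -> F x) -> prob m E <= prob m F.
Proof.
  intros Hn H. rewrite !prob_Ex. apply Ex_le; auto. intros x Hx. unfold ind.
  destruct (excluded_middle_informative (E x)), (excluded_middle_informative (F x)); try lra.
  exfalso; auto.
Qed.

Lemma prob_or {A} (m : Defs.dist A) (E F : A -> Prop) : nonneg m ->
  prob m (fun x => E x \/ F x) <= prob m E + prob m F.
Proof.
  intros Hn. rewrite !prob_Ex, <- Ex_plus. apply Ex_le; auto. intros x _. unfold ind.
  destruct (excluded_middle_informative (E x)), (excluded_middle_informative (F x)),
    (excluded_middle_informative (E x \/ F x)); try lra. tauto.
Qed.

Lemma markov {A} (m : Defs.dist A) (f : A -> R) v : nonneg m -> 0 < v ->
  (forall x, supp m x -> 0 <= f x) ->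
  prob m (fun x => v <= f x) <= Ex m f / v.
Proof.
  intros Hn Hv Hf. rewrite prob_Ex. unfold Rdiv. rewrite Rmult_comm, <- Ex_mult.
  apply Ex_le; auto. intros x Hx. unfold ind. destruct excluded_middle_informative.
  - assert (0 < / v) by (apply Rinv_0_lt_compat; auto).
    assert (/ v * v = 1) by (field; lra). nra.
  - specialize (Hf x Hx). apply Rmult_le_pos; auto. left; apply Rinv_0_lt_compat; auto.
Qed.

Lemma nnodes_add G c nc sv ts : nnodes (add_node G c nc sv ts) = S (nnodes G).
Proof. unfold nnodes, add_node; simpl. rewrite length_app; simpl; lia. Qed.

Lemma color_add_old G c nc sv ts u : (u < nnodes G)%nat -> color (add_node G c nc sv ts) u = color G u.
Proof. unfold color, nnodes, add_node; simpl; intros. rewrite app_nth1; auto. Qed.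

Lemma color_add_new G c nc sv ts : color (add_node G c nc sv ts) (nnodes G) = c.
Proof. unfold color, nnodes, add_node; simpl. rewrite app_nth2; auto. rewrite Nat.sub_diag; auto. Qed.

Lemma ncol_add G c nc sv ts : ncol (add_node G c nc sv ts) = if nc then S (ncol G) else ncol G.
Proof. reflexivity. Qed.

Lemma seed_add G c nc sv ts : is_seed G 0 = true -> is_seed (add_node G c nc sv ts) 0 = true.
Proof. unfold is_seed, add_node; simpl. destruct (seedf G); simpl; auto. discriminate. Qed.

Lemma filter_length_app {A} (f : A -> bool) l1 l2 : length (filter f (l1 ++ l2)) = (length (filter f l1) + length (filter f l2))%nat.
Proof. rewrite filter_app, length_app; auto. Qed.

Lemma deg_add_old G c nc sv ts u : (deg G u <= deg (add_node G c nc sv ts) u)%nat.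
Proof. unfold deg, add_node; simpl. rewrite !filter_length_app. lia. Qed.

Lemma deg_add_new G c nc sv ts : ts <> [] -> (1 <= deg (add_node G c nc sv ts) (nnodes G))%nat.
Proof.
  intros H. unfold deg, add_node; simpl. rewrite !filter_length_app.
  destruct ts as [|w ts]; [congruence|]. simpl. rewrite Nat.eqb_refl. simpl. lia.
Qed.

Lemma nodes_S G c nc sv ts : nodes (add_node G c nc sv ts) = nodes G ++ [nnodes G].
Proof. unfold nodes. rewrite nnodes_add, seq_S. reflexivity. Qed.

Lemma class_size_add G c nc sv ts c0 :
  class_size (add_node G c nc sv ts) c0 = (class_size G c0 + (if Nat.eqb c c0 then 1 else 0))%nat.
Proof.
  unfold class_size. rewrite nodes_S, filter_length_app. f_equal.
  - f_equal. apply filter_ext_in. intros u Hu. unfold nodes in Hu. apply in_seq in Hu.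
    rewrite color_add_old; auto. lia.
  - simpl. rewrite color_add_new. destruct (Nat.eqb c c0); auto.
Qed.

Definition Inv (G : state) : Prop :=
  (1 <= ncol G)%nat /\ (ncol G <= nnodes G)%nat /\
  (forall u, (u < nnodes G)%nat -> (color G u < ncol G)%nat /\ (1 <= deg G u)%nat) /\
  (forall c, (c < ncol G)%nat -> exists u, (u < nnodes G)%nat /\ color G u = c) /\
  is_seed G 0 = true.

Lemma Inv_G2 : Inv G2.
Proof.
  unfold Inv, G2, nnodes, color, deg, is_seed; simpl. split; [lia|split; [lia|split; [|split; [|auto]]]].
  - intros u Hu. destruct u as [|[|u]]; simpl; lia.
  - intros c Hc. destruct c as [|[|c]]. exists 0%nat; split; auto; lia. exists 1%nat; split; auto; lia. lia.
Qed.

Definition step_out (d : nat) (G G' : state) : Prop :=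
  exists c nc ts, G' = add_node G c nc nc ts /\
   ((nc = true /\ c = ncol G /\ ts <> []) \/ (nc = false /\ (c < ncol G)%nat /\ length ts = d)).

Lemma supp_uniform {A} (l : list A) x : supp (uniform l) x -> In x l.
Proof. unfold uniform; intros H. apply supp_weighted in H. rewrite map_map in H; simpl in H. rewrite map_id in H; auto. Qed.

Lemma supp_bern p b : supp (bern p) b -> True.
Proof. auto. Qed.

Lemma supp_step a d i G G' : supp (step a d i G) G' -> step_out d G G'.
Proof.
  unfold step; intros H. apply supp_dbind in H as [b [_ H]]. destruct b.
  - apply supp_dbind in H as [u [_ H]]. apply supp_dbind in H as [us [_ H]].
    apply supp_dret in H. subst. exists (ncol G), true, (u::us). split; auto. left; repeat split; auto; discriminate.
  - apply supp_dbind in H as [c [Hc H]]. apply supp_dbind in H as [us [Hus H]].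
    apply supp_dret in H. subst. apply supp_uniform in Hc. apply in_seq in Hc.
    apply supp_iid in Hus. exists c, false, us. split; auto. right; repeat split; auto; lia.
Qed.

Lemma Inv_step d G G' : (1 <= d)%nat -> Inv G -> step_out d G G' -> Inv G'.
Proof.
  intros Hd [H1 [H2 [H3 [H4 H5]]]] [c [nc [ts [-> Hc]]]].
  assert (Hts : ts <> []) by (destruct Hc as [[_ [_ ?]]|[_ [_ Hl]]]; auto; intros ->; simpl in Hl; lia).
  unfold Inv. rewrite ncol_add, nnodes_add. split; [|split; [|split; [|split]]].
  - destruct nc; lia.
  - destruct nc; lia.
  - intros u Hu. split. destruct (Nat.eq_dec u (nnodes G)) as [->|Hne].
    + rewrite color_add_new. destruct Hc as [[-> [-> _]]|[-> [? _]]]; lia.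
    + rewrite color_add_old by lia. destruct (H3 u ltac:(lia)). destruct nc; lia.
    + destruct (Nat.eq_dec u (nnodes G)) as [->|Hne].
      * apply deg_add_new; auto.
      * pose proof (deg_add_old G c nc nc ts u). destruct (H3 u ltac:(lia)). lia.
  - intros c0 Hc0. destruct (Nat.lt_ge_cases c0 (ncol G)) as [Hl|Hg].
    + destruct (H4 c0 Hl) as [u [Hu Hcu]]. exists u. split. lia. rewrite color_add_old; auto.
    + destruct nc; [|lia]. destruct Hc as [[_ [-> _]]|[? _]]; [|discriminate].
      exists (nnodes G). split. lia. rewrite color_add_new. lia.
  - apply seed_add; auto.
Qed.

Lemma ln_le_mono x y : 0 < x -> x <= y -> ln x <= ln y.
Proof. intros Hx [H|H]. left; apply ln_increasing; auto. subst; lra. Qed.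

Lemma exp_le_mono x y : x <= y -> exp x <= exp y.
Proof. intros [H|H]. left; apply exp_increasing; auto. subst; lra. Qed.

Lemma ln3_ge1 : 1 <= ln 3.
Proof. rewrite <- (ln_exp 1). apply ln_le_mono. apply exp_pos. apply exp_le_3. Qed.

Lemma ln_INR_ge1 i : (3 <= i)%nat -> 1 <= ln (INR i).
Proof. intros H. apply Rle_trans with (ln 3). apply ln3_ge1. apply ln_le_mono. lra.
  replace 3 with (INR 3) by (simpl; lra). apply le_INR; auto. Qed.

Lemma p_range a i : 0 <= a -> (3 <= i)%nat -> 0 <= p_i a i <= 1.
Proof.
  intros Ha Hi. unfold p_i, Rpower. split. left; apply exp_pos.
  rewrite <- exp_0. apply exp_le_mono.
  pose proof (ln_INR_ge1 i Hi). assert (0 <= ln (ln (INR i))).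
  { rewrite <- ln_1. apply ln_le_mono; lra. } nra.
Qed.

Definition sumR (f : nat -> R) (l : list nat) := fold_right (fun c s => f c + s) 0 l.

Lemma Ex_uniform {A} (l : list A) g : Ex (uniform l) g = Ex (map (fun x => (1, x)) l) g * / INR (length l).
Proof.
  unfold uniform. rewrite Ex_weighted. f_equal. f_equal. fold (tot (map (fun x : A => (1, x)) l)).
  induction l; simpl; auto. unfold tot in *. simpl. rewrite IHl. destruct (length l); simpl; lra.
Qed.

Lemma Ex_map1 (l : list nat) g : Ex (map (fun x => (1, x)) l) g = sumR g l.
Proof. induction l; simpl; auto. rewrite IHl; ring. Qed.

Lemma sumR_le (l : list nat) f g : (forall x, In x l -> f x <= g x) -> sumR f l <= sumR g l.
Proof. induction l; simpl; intros; [lra|]. assert (f a <= g a) by auto. assert (sumR f l <= sumR g l) by auto. lra. Qed.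

Lemma Rinv_INR_nonneg n : 0 <= / INR n.
Proof. destruct n. simpl; rewrite Rinv_0; lra. left; apply Rinv_0_lt_compat, lt_0_INR; lia. Qed.

Lemma Ex_bern p f : Ex (bern p) f = p * f true + (1 - p) * f false.
Proof. unfold bern, Ex; simpl; ring. Qed.

Lemma nonneg_bern p : 0 <= p <= 1 -> nonneg (bern p).
Proof. unfold bern, nonneg; simpl; intros H px [<-|[<-|[]]]; simpl; lra. Qed.

Lemma wdeg_nonneg G (l : list nat) : forall wx, In wx (map (fun u => (INR (deg G u), u)) l) -> 0 <= fst wx.
Proof. intros wx H. apply in_map_iff in H as [u [<- _]]. simpl. apply pos_INR. Qed.

Lemma unif_nonneg {A} (l : list A) : forall wx, In wx (map (fun x => (1, x)) l) -> 0 <= fst wx.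
Proof. intros wx H. apply in_map_iff in H as [u [<- _]]. simpl. lra. Qed.


Lemma step_facts a d i G : 0 <= a -> (3 <= i)%nat -> nonneg (step a d i G) /\ mass (step a d i G) <= 1.
Proof.
  intros Ha Hi. pose proof (p_range a i Ha Hi) as Hp. unfold step.
  assert (Hb : forall b : bool, nonneg (if b then
      dbind (weighted (map (fun u => (INR (deg G u), u)) (nodes G))) (fun u =>
      dbind (iid (d - 1) (uniform (filter (is_seed G) (nodes G)))) (fun us =>
      dret (add_node G (ncol G) true true (u :: us))))
    else
      dbind (uniform (seq 0 (ncol G))) (fun c =>
      dbind (iid d (weighted (map (fun u => (INR (deg G u), u))
                                  (filter (fun u => Nat.eqb (color G u) c) (nodes G)))))
        (fun us => dret (add_node G c false false us)))) /\ mass (if b then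
      dbind (weighted (map (fun u => (INR (deg G u), u)) (nodes G))) (fun u =>
      dbind (iid (d - 1) (uniform (filter (is_seed G) (nodes G)))) (fun us =>
      dret (add_node G (ncol G) true true (u :: us))))
    else
      dbind (uniform (seq 0 (ncol G))) (fun c =>
      dbind (iid d (weighted (map (fun u => (INR (deg G u), u))
                                  (filter (fun u => Nat.eqb (color G u) c) (nodes G)))))
        (fun us => dret (add_node G c false false us)))) <= 1).
  { assert (HU : forall A (l : list A), nonneg (uniform l) /\ mass (uniform l) <= 1).
    { intros. split. apply nonneg_weighted, unif_nonneg. apply mass_weighted_le, unif_nonneg. }
    assert (HW : forall l, nonneg (weighted (map (fun u => (INR (deg G u), u)) l)) /\
                   mass (weighted (map (fun u => (INR (deg G u), u)) l)) <= 1).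
    { intros. split. apply nonneg_weighted, wdeg_nonneg. apply mass_weighted_le, wdeg_nonneg. }
    assert (HR : forall (x : state), nonneg (dret x) /\ mass (dret x) <= 1).
    { intros; split. apply nonneg_dret. rewrite mass_dret; lra. }
    intros [|].
    - split.
      + apply nonneg_dbind. apply HW. intros. apply nonneg_dbind. apply iid_facts; apply HU. intros; apply HR.
      + apply mass_dbind_le; try apply HW. intros. split.
        apply nonneg_dbind. apply iid_facts; apply HU. intros; apply HR.
        apply mass_dbind_le; try apply iid_facts; try apply HU. intros; apply HR.
    - split.
      + apply nonneg_dbind. apply HU. intros. apply nonneg_dbind. apply iid_facts; apply HW. intros; apply HR.
      + apply mass_dbind_le; try apply HU. intros. split.
        apply nonneg_dbind. apply iid_facts; apply HW. intros; apply HR.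
        apply mass_dbind_le; try apply iid_facts; try apply HW. intros; apply HR. }
  split.
  - apply nonneg_dbind. apply nonneg_bern; auto. intros b _. apply Hb.
  - apply mass_dbind_le. apply nonneg_bern; auto. unfold mass; rewrite Ex_bern; lra.
    intros b _. apply Hb.
Qed.

Lemma Ex_step_bound a d i G F v1 (v2 : nat -> R) : 0 <= a -> (3 <= i)%nat -> 0 <= v1 ->
  (forall c, 0 <= v2 c) ->
  (forall u us, F (add_node G (ncol G) true true (u :: us)) <= v1) ->
  (forall c us, (c < ncol G)%nat -> F (add_node G c false false us) <= v2 c) ->
  Ex (step a d i G) F <= p_i a i * v1 + (1 - p_i a i) * (sumR v2 (seq 0 (ncol G)) * / INR (ncol G)).
Proof.
  intros Ha Hi Hv1 Hv2 H1 H2. pose proof (p_range a i Ha Hi) as Hp. unfold step.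
  rewrite Ex_dbind, Ex_bern.
  assert (HU : forall A (l : list A), nonneg (uniform l) /\ mass (uniform l) <= 1).
  { intros. split. apply nonneg_weighted, unif_nonneg. apply mass_weighted_le, unif_nonneg. }
  assert (HW : forall l, nonneg (weighted (map (fun u => (INR (deg G u), u)) l)) /\
                 mass (weighted (map (fun u => (INR (deg G u), u)) l)) <= 1).
  { intros. split. apply nonneg_weighted, wdeg_nonneg. apply mass_weighted_le, wdeg_nonneg. }
  apply Rplus_le_compat.
  - apply Rmult_le_compat_l. lra. rewrite Ex_dbind. apply Ex_const_le; try apply HW; auto.
    intros u _. rewrite Ex_dbind. apply Ex_const_le; try apply iid_facts; try apply HU; auto.
    intros us _. rewrite Ex_dret. auto.
  - apply Rmult_le_compat_l. lra. rewrite Ex_dbind, Ex_uniform, Ex_map1, length_seq.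
    apply Rmult_le_compat_r. apply Rinv_INR_nonneg.
    apply sumR_le. intros c Hc. apply in_seq in Hc.
    rewrite Ex_dbind. apply Ex_const_le; try apply iid_facts; try apply HW; auto.
    intros us _. rewrite Ex_dret. apply H2. lia.
Qed.

Lemma tot_pos {A} (l : list (R * A)) wx : (forall wx, In wx l -> 0 <= fst wx) -> In wx l -> 0 < fst wx -> 0 < tot l.
Proof.
  induction l as [|[w x] l IH]; simpl; intros H Hin Hp; [contradiction|].
  assert (0 <= w) by (apply (H (w,x)); auto).
  assert (0 <= tot l) by (apply tot_nonneg; auto).
  destruct Hin as [<-|Hin]. simpl in Hp; lra. assert (0 < tot l) by (apply IH; auto). lra.
Qed.

Lemma mass_wdeg G l u : In u l -> (1 <= deg G u)%nat -> mass (weighted (map (fun u => (INR (deg G u), u)) l)) = 1.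
Proof.
  intros Hu Hd. apply mass_weighted_eq. apply Rgt_not_eq.
  apply (tot_pos _ (INR (deg G u), u)). apply wdeg_nonneg. apply in_map_iff; exists u; auto.
  simpl. apply lt_0_INR; lia.
Qed.

Lemma mass_uniform {A} (l : list A) x : In x l -> mass (uniform l) = 1.
Proof.
  intros Hx. unfold uniform. apply mass_weighted_eq. apply Rgt_not_eq.
  apply (tot_pos _ (1, x)). apply unif_nonneg. apply in_map_iff; exists x; auto. simpl; lra.
Qed.

Lemma mass_step a d i G : Inv G -> mass (step a d i G) = 1.
Proof.
  intros HI. destruct HI as [H1 [H2 [H3 [H4 H5]]]].
  assert (H0n : In 0%nat (nodes G)) by (unfold nodes; apply in_seq; lia).
  unfold step. unfold mass. rewrite Ex_dbind, Ex_bern.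
  assert (E1 : Ex (dbind (weighted (map (fun u => (INR (deg G u), u)) (nodes G))) (fun u =>
      dbind (iid (d - 1) (uniform (filter (is_seed G) (nodes G)))) (fun us =>
      dret (add_node G (ncol G) true true (u :: us))))) (fun _ => 1) = 1).
  { fold (mass (dbind (weighted (map (fun u => (INR (deg G u), u)) (nodes G))) (fun u =>
      dbind (iid (d - 1) (uniform (filter (is_seed G) (nodes G)))) (fun us =>
      dret (add_node G (ncol G) true true (u :: us)))))).
    apply mass_dbind_eq. apply (mass_wdeg G _ 0%nat); auto. apply H3; lia.
    intros. apply mass_dbind_eq. apply iid_mass_eq. apply (mass_uniform _ 0%nat).
    apply filter_In; auto. intros; apply mass_dret. }
  assert (E2 : Ex (dbind (uniform (seq 0 (ncol G))) (fun c =>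
      dbind (iid d (weighted (map (fun u => (INR (deg G u), u))
                                  (filter (fun u => Nat.eqb (color G u) c) (nodes G)))))
        (fun us => dret (add_node G c false false us)))) (fun _ => 1) = 1).
  { fold (mass (dbind (uniform (seq 0 (ncol G))) (fun c =>
      dbind (iid d (weighted (map (fun u => (INR (deg G u), u))
                                  (filter (fun u => Nat.eqb (color G u) c) (nodes G)))))
        (fun us => dret (add_node G c false false us))))).
    apply mass_dbind_eq. apply (mass_uniform _ 0%nat). apply in_seq; lia.
    intros c Hc. apply supp_uniform, in_seq in Hc. destruct (H4 c ltac:(lia)) as [u [Hu Hcu]].
    apply mass_dbind_eq. apply iid_mass_eq. apply (mass_wdeg G _ u).
    apply filter_In. split. unfold nodes; apply in_seq; lia. apply Nat.eqb_eq; auto.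
    apply H3; auto. intros; apply mass_dret. }
  rewrite E1, E2. ring.
Qed.

Fixpoint chain (tr : list state) : Prop :=
  match tr with
  | [] => False
  | [G] => nnodes G = 2%nat
  | G :: ((G' :: _) as r) => nnodes G = S (nnodes G') /\ chain r
  end.

Definition SI (n : nat) (tr : list state) : Prop :=
  chain tr /\ nnodes (hd G2 tr) = Nat.max n 2 /\ Forall Inv tr.

Lemma chain_cons G tr : chain tr -> nnodes G = S (nnodes (hd G2 tr)) -> chain (G :: tr).
Proof. destruct tr as [|G0 tr]; simpl; [tauto|]. intros; split; auto. Qed.

Lemma traj_unfold a d k : (2 <= k)%nat -> traj a d (S k) =
  dbind (traj a d k) (fun tr => dbind (step a d (S k) (hd G2 tr)) (fun G => dret (G :: tr))).
Proof. intros Hk. simpl. destruct (Nat.leb k 1) eqn:E. apply Nat.leb_le in E; lia. reflexivity. Qed.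

Lemma traj_small a d k : (k <= 2)%nat -> traj a d k = dret [G2].
Proof. intros Hk. destruct k as [|[|[|k]]]; simpl; auto; lia. Qed.

Lemma SI_traj a d n tr : (1 <= d)%nat -> supp (traj a d n) tr -> SI n tr.
Proof.
  intros Hd. revert tr. induction n as [|k IH]; intros tr H.
  - rewrite traj_small in H by lia. apply supp_dret in H; subst. unfold SI; simpl.
    split; auto. split; auto. constructor; auto. apply Inv_G2.
  - destruct (Nat.le_gt_cases (S k) 2) as [Hk|Hk].
    + rewrite traj_small in H by lia. apply supp_dret in H; subst. unfold SI; simpl.
      split; auto. split. unfold nnodes; simpl; destruct k as [|[|k]]; simpl; auto; lia. constructor; auto. apply Inv_G2.
    + rewrite traj_unfold in H by lia. apply supp_dbind in H as [tr0 [H0 H]].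
      apply supp_dbind in H as [G [HG H]]. apply supp_dret in H; subst.
      destruct (IH tr0 H0) as [Hc [Hn Hf]].
      apply supp_step in HG.
      assert (HI : Inv (hd G2 tr0)) by (destruct tr0; [simpl in Hc; contradiction| inversion Hf; auto]).
      destruct HG as [c [nc [ts [-> Hcs]]]] eqn:HG'.
      split; [|split].
      * apply chain_cons; auto. rewrite nnodes_add; auto.
      * simpl. rewrite nnodes_add, Hn. lia.
      * constructor; auto. apply (Inv_step d (hd G2 tr0)); auto.
Qed.

Lemma nonneg_traj a d n : 0 <= a -> nonneg (traj a d n) /\ mass (traj a d n) <= 1.
Proof.
  intros Ha. induction n as [|k IH].
  - rewrite traj_small by lia. split. apply nonneg_dret. rewrite mass_dret; lra.
  - destruct (Nat.le_gt_cases (S k) 2) as [Hk|Hk].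
    + rewrite traj_small by lia. split. apply nonneg_dret. rewrite mass_dret; lra.
    + rewrite traj_unfold by lia. split.
      * apply nonneg_dbind. apply IH. intros. apply nonneg_dbind. apply step_facts; auto; lia.
        intros; apply nonneg_dret.
      * apply mass_dbind_le; try apply IH. intros. split.
        apply nonneg_dbind. apply step_facts; auto; lia. intros; apply nonneg_dret.
        apply mass_dbind_le; try (apply step_facts; auto; lia). intros; split. apply nonneg_dret.
        rewrite mass_dret; lra.
Qed.

Lemma mass_traj a d n : (1 <= d)%nat -> mass (traj a d n) = 1.
Proof.
  intros Hd. induction n as [|k IH].
  - rewrite traj_small by lia. apply mass_dret.
  - destruct (Nat.le_gt_cases (S k) 2) as [Hk|Hk].
    + rewrite traj_small by lia. apply mass_dret.
    + rewrite traj_unfold by lia. apply mass_dbind_eq; auto. intros tr Htr.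
      destruct (SI_traj a d k tr Hd Htr) as [Hc [_ Hf]].
      apply mass_dbind_eq. apply mass_step.
      destruct tr; [simpl in Hc; contradiction| inversion Hf; auto].
      intros; apply mass_dret.
Qed.

Lemma traj_super a d (Phi : list state -> R) n : 0 <= a -> (1 <= d)%nat ->
  (forall k tr, (2 <= k)%nat -> SI k tr ->
     Ex (step a d (S k) (hd G2 tr)) (fun G => Phi (G :: tr)) <= Phi tr) ->
  Ex (traj a d n) Phi <= Phi [G2].
Proof.
  intros Ha Hd H. induction n as [|k IH].
  - rewrite traj_small by lia. rewrite Ex_dret; lra.
  - destruct (Nat.le_gt_cases (S k) 2) as [Hk|Hk].
    + rewrite traj_small by lia. rewrite Ex_dret; lra.
    + rewrite traj_unfold by lia. rewrite Ex_dbind. eapply Rle_trans; [|apply IH].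
      apply Ex_le. apply nonneg_traj; auto. intros tr Htr. rewrite Ex_dbind.
      rewrite (Ex_ext _ _ (fun G => Phi (G :: tr))) by (intros; apply Ex_dret).
      apply H. lia. apply SI_traj with a d; auto.
Qed.

Fixpoint exs (P : state -> list state -> Prop) (tr : list state) : Prop :=
  match tr with [] => False | G :: r => P G r \/ exs P r end.

Definition atHead (P : state -> list state -> Prop) (tr : list state) : Prop :=
  match tr with [] => False | G :: r => P G r end.

Lemma exs_chain i P tr : chain tr -> exs (fun G r => nnodes G = i /\ P G r) tr ->
  (i <= nnodes (hd G2 tr))%nat /\ (i = nnodes (hd G2 tr) -> atHead P tr).
Proof.
  induction tr as [|G r IH]; simpl; [tauto|]. intros Hc [[Hi HP]|Hr].
  - subst. split; auto.
  - destruct r as [|G' r']; simpl in Hr; [contradiction|].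
    destruct Hc as [Hn Hc]. destruct (IH Hc Hr) as [Hle _]. simpl in Hle. split; lia.
Qed.

Lemma supp_step_nnodes a d i G G' : supp (step a d i G) G' -> nnodes G' = S (nnodes G).
Proof. intros H. apply supp_step in H as [c [nc [ts [-> _]]]]. apply nnodes_add. Qed.

Lemma prefix a d i n P : 0 <= a -> (1 <= d)%nat -> (2 <= i)%nat -> (i <= n)%nat ->
  prob (traj a d n) (exs (fun G r => nnodes G = i /\ P G r)) <= prob (traj a d i) (atHead P).
Proof.
  intros Ha Hd Hi Hn. induction Hn as [|n Hn IH].
  - apply prob_le. apply nonneg_traj; auto. intros tr Htr HE.
    destruct (SI_traj a d i tr Hd Htr) as [Hc [Hh _]].
    apply (exs_chain i P tr Hc HE). rewrite Hh. lia.
  - eapply Rle_trans; [|apply IH]. rewrite traj_unfold by lia. rewrite !prob_Ex, Ex_dbind.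
    apply Ex_le. apply nonneg_traj; auto. intros tr Htr. rewrite Ex_dbind.
    destruct (SI_traj a d n tr Hd Htr) as [Hc [Hh _]].
    apply Ex_const_le. apply step_facts; auto; lia. apply step_facts; auto; lia. apply ind_nonneg.
    intros G HG. rewrite Ex_dret. apply supp_step_nnodes in HG.
    unfold ind. destruct excluded_middle_informative as [E|E]; [|destruct excluded_middle_informative; lra].
    destruct excluded_middle_informative as [E'|E']; [lra|]. exfalso. simpl in E.
    destruct E as [[E1 _]|E]; auto. rewrite HG, Hh in E1. lia.
Qed.

Definition sumInv (r : list state) : R := fold_right (fun G s => / INR (ncol G) + s) 0 r.
Definition iota (c : nat) (G : state) : R := if Nat.ltb c (ncol G) then 1 else 0.
Definition ZA (c : nat) (tr : list state) : R :=
  match tr with [] => 1 | G :: r => exp (INR (class_size G c) - iota c G - 2 * sumInv r) end.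

Lemma class_size_zero G c : Inv G -> (ncol G <= c)%nat -> class_size G c = 0%nat.
Proof.
  intros [_ [_ [H3 _]]] Hc. unfold class_size.
  rewrite (filter_ext_in _ (fun _ => false)). rewrite filter_false; auto.
  intros u Hu. unfold nodes in Hu. apply in_seq in Hu. destruct (H3 u ltac:(lia)).
  apply Nat.eqb_neq. lia.
Qed.

Lemma sum_hits c N : sumR (fun c' => if Nat.eqb c' c then exp 1 else 1) (seq 0 N) <= INR N + (if Nat.ltb c N then 2 else 0).
Proof.
  induction N as [|N IH]. simpl; lra.
  rewrite seq_S. unfold sumR in *. rewrite fold_right_app. cbn [fold_right].
  assert (Hf : forall l x, fold_right (fun c0 s => (if Nat.eqb c0 c then exp 1 else 1) + s) x l =
     fold_right (fun c0 s => (if Nat.eqb c0 c then exp 1 else 1) + s) 0 l + x).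
  { induction l; simpl; intros; [ring| rewrite IHl; ring]. }
  rewrite Hf, Nat.add_0_l. pose proof exp_le_3. pose proof (exp_pos 1). rewrite S_INR.
  destruct (Nat.eqb N c) eqn:E.
  - apply Nat.eqb_eq in E; subst. rewrite Nat.ltb_irrefl in IH.
    assert (Nat.ltb c (S c) = true) by (apply Nat.ltb_lt; lia). rewrite H1. lra.
  - apply Nat.eqb_neq in E. destruct (Nat.ltb c N) eqn:E1.
    + assert (Nat.ltb c (S N) = true) by (apply Nat.ltb_lt; apply Nat.ltb_lt in E1; lia). rewrite H1. lra.
    + assert (Nat.ltb c (S N) = false) by (apply Nat.ltb_ge; apply Nat.ltb_ge in E1; lia). rewrite H1. lra.
Qed.

Lemma sumR_mult (l : list nat) k f : sumR (fun x => k * f x) l = k * sumR f l.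
Proof. induction l; simpl; [ring| rewrite IHl; ring]. Qed.

Lemma sumR_const (l : list nat) k : sumR (fun _ => k) l = k * INR (length l).
Proof. induction l; simpl; [ring|]. rewrite IHl. destruct (length l); simpl; ring. Qed.

Lemma exp_ineq_neg x : 1 - x <= exp (- x).
Proof. pose proof (exp_ineq1_le (-x)). lra. Qed.

Lemma ZA_step a d c k tr : 0 <= a -> (2 <= k)%nat -> SI k tr ->
  Ex (step a d (S k) (hd G2 tr)) (fun G => ZA c (G :: tr)) <= ZA c tr.
Proof.
  intros Ha Hk [Hc [Hh Hf]]. destruct tr as [|G r]; [simpl in Hc; contradiction|].
  inversion Hf as [|? ? HI _]; subst. simpl hd. simpl ZA.
  set (N := ncol G). set (s := INR (class_size G c)). set (K := sumInv r).
  set (X := exp (s - iota c G - 2 * K)).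
  assert (HN : (1 <= N)%nat) by (apply HI).
  assert (HNr : 1 <= INR N) by (apply (le_INR 1); auto).
  pose proof (p_range a (S k) Ha ltac:(lia)) as Hp.
  set (E2 := exp (- (2 * / INR N))).
  assert (HE2 : 0 < E2) by apply exp_pos.
  eapply Rle_trans.
  apply (Ex_step_bound a d (S k) G _ (X * E2) (fun c' => X * E2 * (if Nat.eqb c' c then exp 1 else 1))); auto; try lia.
  - pose proof (exp_pos (s - iota c G - 2 * K)). fold X in H. nra.
  - intros c'. pose proof (exp_pos (s - iota c G - 2 * K)). fold X in H.
    destruct (Nat.eqb c' c); pose proof (exp_pos 1); apply Rmult_le_pos; nra.
  - intros u us. simpl sumInv. rewrite class_size_add. fold N.
    apply Req_le. unfold X, E2. rewrite <- exp_plus. f_equal.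
    unfold iota. rewrite ncol_add. fold N. fold K.
    destruct (Nat.eqb N c) eqn:E.
    + apply Nat.eqb_eq in E. rewrite (class_size_zero G c HI) by (unfold N in E; lia).
      unfold s. rewrite (class_size_zero G c HI) by (unfold N in E; lia).
      assert (Nat.ltb c (S N) = true) by (apply Nat.ltb_lt; lia).
      assert (Nat.ltb c N = false) by (apply Nat.ltb_ge; lia). fold N. rewrite H, H0.
      rewrite Nat.add_0_l. simpl. ring.
    + apply Nat.eqb_neq in E. rewrite Nat.add_0_r. fold s. fold N.
      assert (Nat.ltb c (S N) = Nat.ltb c N).
      { destruct (Nat.ltb c N) eqn:E1. apply Nat.ltb_lt in E1; apply Nat.ltb_lt; lia.
        apply Nat.ltb_ge in E1; apply Nat.ltb_ge; lia. }
      rewrite H. ring.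
  - intros c' us Hc'. simpl sumInv. rewrite class_size_add.
    apply Req_le. unfold X, E2. unfold iota. rewrite ncol_add. fold N K.
    rewrite plus_INR. fold s. rewrite Nat.eqb_sym. destruct (Nat.eqb c c').
    + rewrite <- !exp_plus. f_equal. simpl. ring.
    + rewrite Rmult_1_r, <- exp_plus. f_equal. simpl. ring.
  - rewrite sumR_mult.
    assert (Hs := sum_hits c N).
    assert (Hs' : sumR (fun c' => if Nat.eqb c' c then exp 1 else 1) (seq 0 N) <= INR N + 2)
      by (destruct (Nat.ltb c N); lra).
    assert (HX : 0 < X) by apply exp_pos.
    assert (Hinv : 0 < / INR N) by (apply Rinv_0_lt_compat; lra).
    assert (HE2b : E2 * (1 + 2 * / INR N) <= 1).
    { unfold E2. pose proof (exp_ineq1_le (2 * / INR N)).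
      replace 1 with (exp (- (2 * / INR N)) * exp (2 * / INR N)) at 2
        by (rewrite <- exp_plus; replace (- (2 * / INR N) + 2 * / INR N) with 0 by ring; apply exp_0).
      apply Rmult_le_compat_l; [left; apply exp_pos| lra]. }
    assert (HE2c : E2 <= 1).
    { unfold E2. rewrite <- exp_0. apply exp_le_mono. nra. }
    assert (Hsum : X * E2 * sumR (fun c' => if Nat.eqb c' c then exp 1 else 1) (seq 0 N) * / INR N <= X).
    { apply Rle_trans with (X * E2 * (INR N + 2) * / INR N).
      apply Rmult_le_compat_r; [lra|]. apply Rmult_le_compat_l; [nra|lra].
      replace (X * E2 * (INR N + 2) * / INR N) with (X * (E2 * (1 + 2 * / INR N))) by (field; lra).
      nra. }
    fold N. assert (X * E2 <= X) by nra.
    apply Rle_trans with (p_i a (S k) * X + (1 - p_i a (S k)) * X); [|lra].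
    apply Rplus_le_compat; apply Rmult_le_compat_l; lra.
Qed.

Definition mu (a : R) (i : nat) : R := sumR (p_i a) (seq 3 (i - 2)).
Definition ZB (a : R) (tr : list state) : R :=
  match tr with [] => 1 | G :: r => exp (- INR (ncol G) + mu a (nnodes G) / 2) end.

Lemma mu_S a k : (2 <= k)%nat -> mu a (S k) = mu a k + p_i a (S k).
Proof.
  intros Hk. unfold mu. replace (S k - 2)%nat with (S (k - 2)) by lia. rewrite seq_S.
  unfold sumR. rewrite fold_right_app. simpl. replace (3 + (k - 2))%nat with (S k) by lia.
  assert (Hf : forall l x, fold_right (fun c s => p_i a c + s) x l =
     fold_right (fun c s => p_i a c + s) 0 l + x).
  { induction l; simpl; intros; [ring| rewrite IHl; ring]. }
  rewrite Hf. replace (S (S (S (k - 2)))) with (S k) by lia. ring.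
Qed.

Lemma ZB_step a d k tr : 0 <= a -> (2 <= k)%nat -> SI k tr ->
  Ex (step a d (S k) (hd G2 tr)) (fun G => ZB a (G :: tr)) <= ZB a tr.
Proof.
  intros Ha Hk [Hc [Hh Hf]]. destruct tr as [|G r]; [simpl in Hc; contradiction|].
  inversion Hf as [|? ? HI _]; subst. simpl hd in *. simpl ZB.
  rewrite Nat.max_l in Hh by lia.
  set (N := ncol G). set (m := mu a (nnodes G)).
  assert (HN : (1 <= N)%nat) by (apply HI).
  assert (HNr : 1 <= INR N) by (apply (le_INR 1); auto).
  pose proof (p_range a (S k) Ha ltac:(lia)) as Hp. set (p := p_i a (S k)) in *.
  assert (Hm' : mu a (S k) = m + p) by (unfold m; rewrite Hh; apply mu_S; auto).
  eapply Rle_trans.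
  apply (Ex_step_bound a d (S k) G _ (exp (- (INR N + 1) + (m + p) / 2)) (fun _ => exp (- INR N + (m + p) / 2))); auto; try lia.
  - left; apply exp_pos.
  - intros; left; apply exp_pos.
  - intros u us. rewrite ncol_add, nnodes_add, Hh, Hm'. fold N. rewrite S_INR. lra.
  - intros c' us _. rewrite ncol_add, nnodes_add, Hh, Hm'. fold N. lra.
  - fold N. fold p. rewrite sumR_const, length_seq.
    replace (exp (- INR N + (m + p) / 2) * INR N * / INR N) with (exp (- INR N + (m + p) / 2)) by (field; lra).
    replace (exp (- (INR N + 1) + (m + p) / 2)) with (exp (- INR N + m / 2) * exp (p / 2) * exp (-1))
      by (rewrite <- !exp_plus; apply (f_equal exp); lra).
    replace (exp (- INR N + (m + p) / 2)) with (exp (- INR N + m / 2) * exp (p / 2))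
      by (rewrite <- !exp_plus; apply (f_equal exp); lra).
    set (Y := exp (- INR N + m / 2)). assert (0 < Y) by apply exp_pos.
    assert (He : exp (-1) <= / 2).
    { pose proof (exp_ineq1_le 1). assert (exp 1 * exp (-1) = 1) by (rewrite <- exp_plus; replace (1 + -1) with 0 by ring; apply exp_0).
      pose proof (exp_pos (-1)). nra. }
    assert (Hq : (1 - p / 2) * exp (p / 2) <= 1).
    { pose proof (exp_ineq_neg (p / 2)). assert (exp (- (p/2)) * exp (p / 2) = 1) by (rewrite <- exp_plus; replace (- (p/2) + p/2) with 0 by ring; apply exp_0).
      pose proof (exp_pos (p/2)). nra. }
    pose proof (exp_pos (p / 2)). pose proof (exp_pos (-1)).
    assert (p * (Y * exp (p / 2) * exp (-1)) <= p * (Y * exp (p / 2) * / 2)).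
    { apply Rmult_le_compat_l. lra. apply Rmult_le_compat_l. nra. auto. }
    assert (Y * ((1 - p / 2) * exp (p / 2)) <= Y) by nra.
    nra.
Qed.

Lemma ln_le_id y : 0 < y -> ln y <= y.
Proof. intros Hy. pose proof (exp_ineq1_le (ln y)). rewrite exp_ln in H; lra. Qed.

Lemma Rpower_pos x y : 0 < Rpower x y.
Proof. unfold Rpower; apply exp_pos. Qed.

Lemma growth b : 0 < b -> exists x0, 1 < x0 /\ forall x, x0 <= x -> 8 * Rpower (ln x) b + 2 <= x.
Proof.
  intros Hb. set (K := Rpower (2 * b) b).
  assert (HK : 0 < K) by apply Rpower_pos.
  exists ((8 * K + 2) * (8 * K + 2)). split. nra.
  intros x Hx. assert (Hx1 : 1 < x) by nra.
  set (z := Rpower x (/ (2 * b))). assert (Hz : 0 < z) by apply Rpower_pos.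
  assert (Hlnx : ln x = 2 * b * ln z).
  { unfold z. rewrite ln_Rpower. field. lra. }
  assert (Hlx0 : 0 < ln x) by (rewrite <- ln_1; apply ln_increasing; lra).
  assert (Hle : ln x <= 2 * b * z) by (rewrite Hlnx; pose proof (ln_le_id z Hz); nra).
  set (s := Rpower x (/ 2)).
  assert (Hs : s * s = x).
  { unfold s. rewrite <- Rpower_plus. replace (/2 + /2) with 1 by field. apply Rpower_1; lra. }
  assert (Hs0 : 0 < s) by apply Rpower_pos.
  assert (HP : Rpower (ln x) b <= K * s).
  { apply Rle_trans with (Rpower (2 * b * z) b). apply Rle_Rpower_l; lra.
    unfold K. rewrite <- Rpower_mult_distr by lra. apply Req_le. apply (f_equal (Rmult _)).
    unfold z, s. rewrite Rpower_mult. apply (f_equal (Rpower x)). field. lra. }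
  assert (Hsb : 8 * K + 2 <= s).
  { destruct (Rle_lt_dec (8 * K + 2) s); auto. exfalso.
    assert (s * s < (8 * K + 2) * (8 * K + 2)) by nra. lra. }
  assert (s >= 1) by lra. nra.
Qed.

Lemma lnINR_pos i : (2 <= i)%nat -> 0 < ln (INR i).
Proof. intros. rewrite <- ln_1. apply ln_increasing. lra. apply (lt_INR 1); lia. Qed.

Lemma p_i_ge a j i : 0 <= a -> (3 <= j)%nat -> (j <= i)%nat -> p_i a i <= p_i a j.
Proof.
  intros Ha Hj Hji. unfold p_i, Rpower. apply exp_le_mono.
  assert (1 <= ln (INR j)) by (apply ln_INR_ge1; auto).
  assert (ln (INR j) <= ln (INR i)) by (apply ln_le_mono; [apply lt_0_INR; lia| apply le_INR; auto]).
  assert (ln (ln (INR j)) <= ln (ln (INR i))) by (apply ln_le_mono; lra).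
  nra.
Qed.

Lemma sumR_ge (l : list nat) f v : (forall x, In x l -> v <= f x) -> INR (length l) * v <= sumR f l.
Proof.
  induction l; simpl; intros H; [lra|]. assert (v <= f a) by auto. assert (INR (length l) * v <= sumR f l) by auto.
  destruct (length l); simpl in *; lra.
Qed.

Lemma mu_ge a i : 0 <= a -> (3 <= i)%nat -> INR (i - 2) * p_i a i <= mu a i.
Proof.
  intros Ha Hi. unfold mu. replace (INR (i - 2)) with (INR (length (seq 3 (i - 2)))) by (rewrite length_seq; auto). apply sumR_ge.
  intros x Hx. apply in_seq in Hx. apply p_i_ge; auto; lia.
Qed.

Lemma p_i_inv a i : p_i a i = / Rpower (ln (INR i)) a.
Proof. unfold p_i. apply Rpower_Ropp. Qed.

Definition hh (i : nat) : R := if Nat.leb 3 i then / INR (i - 2) else 0.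

Lemma harmonic m : (1 <= m)%nat -> sumR hh (seq 2 (S m)) <= 1 + ln (INR m).
Proof.
  intros Hm. induction Hm as [|m Hm IH].
  - simpl. unfold hh; simpl. rewrite ln_1. lra.
  - rewrite seq_S. unfold sumR in *. rewrite fold_right_app. cbn [fold_right].
    assert (Hf : forall l x, fold_right (fun c s => hh c + s) x l =
       fold_right (fun c s => hh c + s) 0 l + x).
    { induction l; simpl; intros; [ring| rewrite IHl; ring]. }
    rewrite Hf. replace (2 + S m)%nat with (S m + 2)%nat by lia.
    unfold hh at 2. replace (Nat.leb 3 (S m + 2)) with true by (symmetry; apply Nat.leb_le; lia).
    replace (S m + 2 - 2)%nat with (S m) by lia.
    assert (Hm0 : 1 <= INR m) by (apply (le_INR 1); auto).
    rewrite S_INR.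
    assert (/ (INR m + 1) <= ln (INR m + 1) - ln (INR m)).
    { assert (Hq : 0 < INR m / (INR m + 1)) by (apply Rdiv_lt_0_compat; lra).
      pose proof (exp_ineq1_le (ln (INR m / (INR m + 1)))) as Hl. rewrite exp_ln in Hl by auto.
      unfold Rdiv in Hl. rewrite ln_mult in Hl by (try apply Rinv_0_lt_compat; lra).
      rewrite ln_Rinv in Hl by lra.
      replace (INR m * / (INR m + 1)) with (1 - / (INR m + 1)) in Hl by (field; lra). lra. }
    lra.
Qed.

Lemma sumR_app f l1 l2 : sumR f (l1 ++ l2) = sumR f l1 + sumR f l2.
Proof. induction l1; simpl; [ring| rewrite IHl1; ring]. Qed.

Lemma chain_ge2 tr : chain tr -> (2 <= nnodes (hd G2 tr))%nat.
Proof.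
  induction tr as [|G r IH]; simpl; [tauto|]. destruct r as [|G' r']; intros H.
  lia. destruct H as [H1 H2]. specialize (IH H2). simpl in IH. lia.
Qed.

Lemma chain_lt G r : chain (G :: r) -> forall G', In G' r -> (nnodes G' < nnodes G)%nat.
Proof.
  revert G. induction r as [|G1 r IH]; simpl; intros G Hc G' Hin; [contradiction|].
  destruct Hc as [H1 H2]. destruct Hin as [<-|Hin]. lia.
  specialize (IH G1 H2 G' Hin). lia.
Qed.

Lemma sumInv_chain G r (f : nat -> R) : chain (G :: r) ->
  (forall G', In G' r -> / INR (ncol G') <= f (nnodes G')) ->
  sumInv r <= sumR f (seq 2 (nnodes G - 2)).
Proof.
  revert G. induction r as [|G1 r IH]; intros G Hc Hf.
  - simpl in Hc. rewrite Hc. simpl. lra.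
  - destruct Hc as [H1 H2]. pose proof (chain_ge2 _ H2) as H3. simpl in H3.
    rewrite H1. replace (S (nnodes G1) - 2)%nat with (S (nnodes G1 - 2)) by lia.
    rewrite seq_S, sumR_app. simpl sumInv. replace (2 + (nnodes G1 - 2))%nat with (nnodes G1) by lia.
    simpl sumR. assert (/ INR (ncol G1) <= f (nnodes G1)) by (apply Hf; simpl; auto).
    assert (sumInv r <= sumR f (seq 2 (nnodes G1 - 2))) by (apply IH; auto; intros; apply Hf; simpl; auto).
    lra.
Qed.

Definition g1 (J : R) (i : nat) : R := if Rlt_dec (INR i) J then 1 else 0.

Lemma sum_g1 J s m : sumR (g1 J) (seq s m) <= Rmax 0 (J - INR s + 1).
Proof.
  revert s. induction m as [|m IH]; intros s; simpl. apply Rmax_l.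
  specialize (IH (S s)). rewrite S_INR in IH. unfold g1 at 1. destruct Rlt_dec.
  - unfold Rmax in *. destruct Rle_dec; destruct Rle_dec; lra.
  - unfold Rmax in *. destruct Rle_dec; destruct Rle_dec; lra.
Qed.

Lemma sumR_plus f g l : sumR (fun x => f x + g x) l = sumR f l + sumR g l.
Proof. induction l; simpl; [ring| rewrite IHl; ring]. Qed.

Definition Bad (a J : R) (G : state) : Prop :=
  J <= INR (nnodes G) /\ INR (ncol G) < mu a (nnodes G) / 4.

Definition yt (a J : R) (t : nat) : R := J + 4 * Rpower (ln (INR t)) a * (1 + ln (INR t)).

Lemma hh_nonneg i : 0 <= hh i.
Proof. unfold hh. destruct (Nat.leb 3 i). apply Rinv_INR_nonneg. lra. Qed.

Lemma sumInv_bound a J G r : 0 <= a -> 3 <= J -> chain (G :: r) -> Forall Inv r ->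
  (forall G', In G' r -> ~ Bad a J G') -> (4 <= nnodes G)%nat ->
  sumInv r <= yt a J (nnodes G).
Proof.
  intros Ha HJ Hc Hf HB Ht. set (t := nnodes G) in *.
  set (K := Rpower (ln (INR t)) a). assert (HK : 0 < K) by apply Rpower_pos.
  eapply Rle_trans. apply (sumInv_chain G r (fun i => g1 J i + 4 * K * hh i)); auto.
  - intros G' HG'. assert (Hlt := chain_lt G r Hc G' HG').
    assert (HI : Inv G') by (rewrite Forall_forall in Hf; auto).
    assert (H2 : (2 <= nnodes G')%nat).
    { destruct (in_split _ _ HG') as [l1 [l2 ->]].
      assert (chain (G' :: l2)).
      { clear -Hc. revert G Hc. induction l1 as [|x l1 IH]; simpl; intros G Hc.
        destruct Hc; auto. destruct Hc as [_ Hc]. apply (IH x). destruct l1; auto. }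
      apply chain_ge2 in H. auto. }
    set (i := nnodes G') in *. set (N := ncol G').
    assert (HN : 1 <= INR N) by (apply (le_INR 1); apply HI).
    pose proof (hh_nonneg i).
    unfold g1. destruct Rlt_dec as [Hl|Hl].
    + assert (/ INR N <= 1). { rewrite <- Rinv_1. apply Rinv_le_contravar; lra. } nra.
    + apply Rnot_lt_le in Hl. assert (Hi3 : (3 <= i)%nat).
      { destruct (le_lt_dec 3 i); auto. assert (INR i <= INR 2) by (apply le_INR; lia). simpl in H0. lra. }
      assert (HmuN : mu a i / 4 <= INR N).
      { destruct (Rle_lt_dec (mu a i / 4) (INR N)); auto. exfalso. apply (HB G' HG').
        split; auto. }
      pose proof (mu_ge a i Ha Hi3) as Hmu.
      assert (Hi2 : 1 <= INR (i - 2)) by (apply (le_INR 1); lia).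
      set (P := Rpower (ln (INR i)) a). assert (HP : 0 < P) by apply Rpower_pos.
      rewrite p_i_inv in Hmu. fold P in Hmu.
      assert (HPK : P <= K).
      { apply Rle_Rpower_l; auto. split. apply lnINR_pos; lia. apply ln_le_mono. apply lt_0_INR; lia.
        apply le_INR; lia. }
      assert (Hhh : hh i = / INR (i - 2)).
      { unfold hh. replace (Nat.leb 3 i) with true by (symmetry; apply Nat.leb_le; auto). auto. }
      rewrite Hhh.
      assert (H0mu : INR (i - 2) / P <= mu a i) by (unfold Rdiv; lra).
      assert (HmuP : 0 < INR (i - 2) / P) by (apply Rdiv_lt_0_compat; lra).
      apply Rle_trans with (/ (INR (i - 2) / P / 4)).
      { apply Rinv_le_contravar; lra. }
      replace (/ (INR (i - 2) / P / 4)) with (4 * P * / INR (i - 2)) by (field; lra).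
      assert (0 < / INR (i - 2)) by (apply Rinv_0_lt_compat; lra).
      assert (4 * P * / INR (i - 2) <= 4 * K * / INR (i - 2)) by (apply Rmult_le_compat_r; lra).
      lra.
  - rewrite sumR_plus, sumR_mult.
    pose proof (sum_g1 J 2 (t - 2)) as Hg. replace (INR 2) with 2 in Hg by (simpl; lra).
    assert (Hmx : Rmax 0 (J - 2 + 1) = J - 1) by (unfold Rmax; destruct Rle_dec; lra).
    rewrite Hmx in Hg.
    replace (t - 2)%nat with (S (t - 3)) by lia.
    pose proof (harmonic (t - 3) ltac:(lia)) as Hh.
    assert (ln (INR (t - 3)) <= ln (INR t)).
    { apply ln_le_mono. apply lt_0_INR; lia. apply le_INR; lia. }
    replace (S (t - 3)) with (t - 2)%nat in Hh by lia.
    unfold yt. fold t K. replace (S (t - 3)) with (t - 2)%nat by lia. nra.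
Qed.

Lemma ZA_G2 c : ZA c [G2] = 1.
Proof.
  unfold ZA, sumInv, iota, class_size, nodes, nnodes, color, G2. simpl.
  destruct c as [|[|c]]; simpl; rewrite <- exp_0; apply (f_equal exp); simpl; lra.
Qed.

Lemma probA a d n t c C y : 0 <= a -> (1 <= d)%nat -> (2 <= t)%nat -> (t <= n)%nat ->
  prob (traj a d n) (exs (fun G r => nnodes G = t /\ (C < INR (class_size G c) /\ sumInv r <= y)))
  <= exp (1 + 2 * y - C).
Proof.
  intros Ha Hd Ht Htn. eapply Rle_trans. apply prefix; auto.
  set (v := exp (C - 1 - 2 * y)).
  eapply Rle_trans. apply (prob_le _ _ (fun tr => v <= ZA c tr)). apply nonneg_traj; auto.
  - intros tr _ H. destruct tr as [|G r]; simpl in H; [contradiction|]. destruct H as [H1 H2].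
    unfold v, ZA. apply exp_le_mono. unfold iota. destruct (Nat.ltb c (ncol G)); lra.
  - eapply Rle_trans. apply markov. apply nonneg_traj; auto. apply exp_pos.
    intros tr _. destruct tr; simpl; [lra| left; apply exp_pos].
    assert (Ex (traj a d t) (ZA c) <= 1).
    { rewrite <- (ZA_G2 c). apply traj_super; auto. intros. apply ZA_step; auto. }
    assert (0 < v) by apply exp_pos.
    apply Rle_trans with (1 / v). unfold Rdiv. apply Rmult_le_compat_r. left; apply Rinv_0_lt_compat; auto. auto.
    unfold v. unfold Rdiv. rewrite Rmult_1_l, <- exp_Ropp. apply Req_le, (f_equal exp). ring.
Qed.

Lemma probB a d n i J : 0 <= a -> (1 <= d)%nat -> (2 <= i)%nat -> (i <= n)%nat ->
  prob (traj a d n) (exs (fun G r => nnodes G = i /\ Bad a J G)) <= exp (- (mu a i / 4)).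
Proof.
  intros Ha Hd Ht Htn. eapply Rle_trans. apply (prefix a d i n (fun G _ => Bad a J G)); auto.
  set (v := exp (mu a i / 4)).
  eapply Rle_trans. apply (prob_le _ _ (fun tr => v <= ZB a tr)). apply nonneg_traj; auto.
  - intros tr Htr H. destruct (SI_traj a d i tr Hd Htr) as [_ [Hh _]].
    rewrite Nat.max_l in Hh by lia.
    destruct tr as [|G r]; simpl in H; [contradiction|]. destruct H as [H1 H2]. simpl in Hh.
    unfold v, ZB. apply exp_le_mono. rewrite Hh in *. lra.
  - eapply Rle_trans. apply markov. apply nonneg_traj; auto. apply exp_pos.
    intros tr _. destruct tr; simpl; [lra| left; apply exp_pos].
    assert (Ex (traj a d i) (ZB a) <= exp (-2)).
    { replace (exp (-2)) with (ZB a [G2]). apply traj_super; auto. intros. apply ZB_step; auto.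
      unfold ZB, mu. simpl. apply (f_equal exp). unfold nnodes; simpl. unfold sumR; simpl. lra. }
    assert (0 < v) by apply exp_pos.
    apply Rle_trans with (exp (-2) / v). unfold Rdiv. apply Rmult_le_compat_r. left; apply Rinv_0_lt_compat; auto. auto.
    unfold v. unfold Rdiv. rewrite <- exp_Ropp, <- exp_plus. apply exp_le_mono. lra.
Qed.

Lemma prob_false {A} (m : Defs.dist A) : prob m (fun _ => False) = 0.
Proof. induction m as [|[p x] m IH]; simpl; auto. rewrite IH. destruct excluded_middle_informative; [contradiction| ring]. Qed.

Lemma prob_union {A} (m : Defs.dist A) (l : list nat) (E : nat -> A -> Prop) : nonneg m ->
  prob m (fun x => exists i, In i l /\ E i x) <= sumR (fun i => prob m (E i)) l.
Proof.
  intros Hn. induction l as [|i l IH]; simpl.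
  - rewrite <- (prob_false m). apply prob_le; auto. intros x _ [i [[] _]].
  - eapply Rle_trans. 2: { apply Rplus_le_compat_l. apply IH. }
    eapply Rle_trans. 2: { apply prob_or; auto. }
    apply prob_le; auto. intros x _ [j [[<-|Hj] HE]]. left; auto. right; exists j; auto.
Qed.

Lemma prob_guard {A} (m : Defs.dist A) (Q : Prop) (E : A -> Prop) v : nonneg m -> 0 <= v ->
  (Q -> prob m E <= v) -> prob m (fun x => Q /\ E x) <= (if excluded_middle_informative Q then v else 0).
Proof.
  intros Hn Hv H. destruct excluded_middle_informative as [q|q].
  - eapply Rle_trans. 2: apply H; auto. apply prob_le; auto. tauto.
  - rewrite <- (prob_false m). apply prob_le; auto. tauto.
Qed.

Lemma prob_compl {A} (m : Defs.dist A) E : prob m E + prob m (fun x => ~ E x) = mass m.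
Proof.
  rewrite !prob_Ex. unfold mass. rewrite <- Ex_plus. apply Ex_ext. intros x _. unfold ind.
  destruct excluded_middle_informative; destruct excluded_middle_informative; try tauto; lra.
Qed.

Lemma sumR_single f x : sumR f [x] = f x.
Proof. unfold sumR; simpl; ring. Qed.

Lemma tele x m : 1 < x ->
  sumR (fun i => if excluded_middle_informative (x <= INR i) then / (INR i * (INR i - 1)) else 0) (seq 2 m)
  <= Rmax 0 (/ (x - 1) - / INR (S m)).
Proof.
  intros Hx. induction m as [|m IH].
  - simpl. apply Rmax_l.
  - rewrite seq_S, sumR_app, sumR_single. replace (2 + m)%nat with (S (S m)) by lia.
    assert (H1 : 1 <= INR (S m)) by (apply (le_INR 1); lia).
    rewrite (S_INR (S m)). set (y := INR (S m)) in *.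
    assert (Hy : / (y + 1) < / y) by (apply Rinv_lt_contravar; nra).
    destruct excluded_middle_informative as [Hle|Hle].
    + assert (/ ((y + 1) * (y + 1 - 1)) = / y - / (y + 1)) by (field; lra).
      assert (/ y <= / (x - 1)) by (apply Rinv_le_contravar; lra).
      unfold Rmax in *. destruct Rle_dec; destruct Rle_dec; lra.
    + unfold Rmax in *. destruct Rle_dec; destruct Rle_dec; lra.
Qed.

Lemma tele' x m : 1 < x ->
  sumR (fun i => if excluded_middle_informative (x <= INR i) then / (INR i * (INR i - 1)) else 0) (seq 2 m)
  <= / (x - 1).
Proof.
  intros Hx. eapply Rle_trans. apply tele; auto.
  assert (0 < / INR (S m)) by (apply Rinv_0_lt_compat, lt_0_INR; lia).
  assert (0 < / (x - 1)) by (apply Rinv_0_lt_compat; lra).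
  unfold Rmax; destruct Rle_dec; lra.
Qed.

Lemma exs_mono P Q tr : (forall G r, P G r -> Q G r) -> exs P tr -> exs Q tr.
Proof. induction tr; simpl; intuition. Qed.

Lemma In_exs G tr : In G tr -> exists r, exs (fun G' r' => G' = G /\ r' = r) tr.
Proof.
  induction tr as [|G0 tr IH]; simpl; [tauto|]. intros [<-|H].
  exists tr; left; auto. destruct (IH H) as [r Hr]; exists r; right; auto.
Qed.

Lemma suffix_chain G r tr : exs (fun G' r' => G' = G /\ r' = r) tr -> chain tr ->
  chain (G :: r) /\ (forall x, In x (G :: r) -> In x tr).
Proof.
  induction tr as [|G0 tr IH]; simpl; [tauto|]. intros [[-> ->]|H] Hc.
  - split; auto.
  - assert (Hc' : chain tr) by (destruct tr; [simpl in H; contradiction| apply Hc]).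
    destruct (IH H Hc') as [H1 H2]. split; auto.
Qed.

Lemma In_nnodes n tr G : SI n tr -> In G tr -> (2 <= nnodes G)%nat /\ (nnodes G <= Nat.max n 2)%nat.
Proof.
  intros [Hc [Hh _]] Hin. destruct tr as [|G0 r]; [simpl in Hc; contradiction|].
  simpl in Hh. destruct Hin as [<-|Hin].
  - split. pose proof (chain_ge2 _ Hc); simpl in *; lia. lia.
  - pose proof (chain_lt G0 r Hc G Hin).
    apply In_split in Hin as [l1 [l2 ->]].
    assert (chain (G :: l2)).
    { clear -Hc. revert G0 Hc. induction l1 as [|x l1 IH]; simpl; intros G0 Hc.
      destruct Hc; auto. destruct Hc as [_ Hc]. apply (IH x). destruct l1; auto. }
    pose proof (chain_ge2 _ H0). simpl in *. lia.
Qed.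

Definition T1 (a : R) (n : nat) : R := Rpower (ln (INR n)) (a + 1).
Definition EB (a J : R) (i : nat) (tr : list state) : Prop :=
  exs (fun G r => nnodes G = i /\ Bad a J G) tr.
Definition EA (a J : R) (t c : nat) (tr : list state) : Prop :=
  exs (fun G r => nnodes G = t /\ (24 * Rpower (ln (INR t)) (a + 1) < INR (class_size G c) /\ sumInv r <= yt a J t)) tr.

Lemma T1_ge4 a n : 3 <= ln (T1 a n) -> 4 <= T1 a n.
Proof.
  intros H. pose proof (exp_ineq1_le (ln (T1 a n))). rewrite exp_ln in H0 by apply Rpower_pos. lra.
Qed.

Lemma INR_ge_nat x t : INR x <= INR t -> (x <= t)%nat.
Proof. intros H. destruct (le_lt_dec x t); auto. apply lt_INR in l. lra. Qed.

Lemma decomp a d n tr : 0 <= a -> (1 <= d)%nat -> (2 <= n)%nat -> 3 <= ln (T1 a n) ->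
  T1 a n <= INR n -> supp (traj a d n) tr -> ~ good a 24 n tr ->
  (exists i, In i (seq 2 (n - 1)) /\ EB a (ln (T1 a n)) i tr) \/
  (exists t, In t (seq 2 (n - 1)) /\ (T1 a n <= INR t /\ exists c, In c (seq 0 t) /\ EA a (ln (T1 a n)) t c tr)).
Proof.
  intros Ha Hd Hn HJ HTn Htr Hng. set (J := ln (T1 a n)) in *.
  pose proof (T1_ge4 a n HJ) as HT4.
  pose proof (SI_traj a d n tr Hd Htr) as HSI'. pose proof HSI' as [Hc [Hh Hf]].
  rewrite Nat.max_l in Hh by lia.
  assert (Hne : tr <> []) by (intros ->; simpl in Hc; auto).
  assert (Step1 : exists Gt, In Gt tr /\ T1 a n <= INR (nnodes Gt) /\ exists c,
     24 * Rpower (ln (INR (nnodes Gt))) (a + 1) < INR (class_size Gt c)).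
  { unfold good in Hng. apply not_and_or in Hng as [H|H].
    - apply not_all_ex_not in H as [c H]. apply Rnot_le_lt in H.
      exists (hd G2 tr). split. destruct tr; [congruence| left; auto].
      rewrite Hh. split; auto. exists c. auto.
    - apply not_all_ex_not in H as [Gt H]. apply imply_to_and in H as [H1 H].
      apply imply_to_and in H as [H2 H]. apply not_all_ex_not in H as [c H]. apply Rnot_le_lt in H.
      exists Gt; split; auto; split; [|exists c; auto]. apply Rle_trans with (Rpower (ln (INR n)) (a+1)); auto.
      right; reflexivity. }
  destruct Step1 as [Gt [HGt [HT [c Hcs]]]].
  destruct (classic (exists G', In G' tr /\ Bad a J G')) as [[G' [HG' HB]]|HnB].
  - left. exists (nnodes G'). split.
    + apply in_seq. pose proof (In_nnodes n tr G' HSI' HG'). rewrite Nat.max_l in H by lia. lia.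
    + destruct (In_exs G' tr HG') as [r Hr]. unfold EB. eapply exs_mono; [|exact Hr].
      intros G r0 [-> _]. auto.
  - right. exists (nnodes Gt). pose proof (In_nnodes n tr Gt HSI' HGt) as Hr2.
    rewrite Nat.max_l in Hr2 by lia.
    split. apply in_seq; lia. split. auto.
    assert (HIt : Inv Gt) by (rewrite Forall_forall in Hf; auto).
    assert (HL : 0 < 24 * Rpower (ln (INR (nnodes Gt))) (a + 1)) by (pose proof (Rpower_pos (ln (INR (nnodes Gt))) (a+1)); lra).
    exists c. split.
    + apply in_seq. split. lia. simpl.
      destruct (le_lt_dec (ncol Gt) c) as [Hle|Hlt].
      * rewrite (class_size_zero Gt c HIt Hle) in Hcs. simpl in Hcs. lra.
      * destruct HIt as [_ [H2 _]]. lia.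
    + destruct (In_exs Gt tr HGt) as [r Hr]. unfold EA. eapply exs_mono; [|exact Hr].
      intros G r0 [-> ->]. split; auto. split; auto.
      destruct (suffix_chain Gt r tr Hr Hc) as [Hcr Hin].
      apply sumInv_bound; auto.
      * rewrite Forall_forall in *. intros x Hx. apply Hf, Hin. right; auto.
      * intros x Hx HBx. apply HnB. exists x. split; auto. apply Hin; right; auto.
      * apply INR_ge_nat. simpl. lra.
Qed.

Lemma exp_m2ln x : 0 < x -> exp (- (2 * ln x)) = / (x * x).
Proof. intros. rewrite exp_Ropp. f_equal. replace (2 * ln x) with (ln x + ln x) by ring.
  rewrite exp_plus, exp_ln; auto. Qed.

Lemma exp_m3ln x : 0 < x -> exp (1 - 3 * ln x) = exp 1 * / (x * x * x).
Proof. intros. unfold Rminus. rewrite exp_plus. f_equal. rewrite exp_Ropp. f_equal.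
  replace (3 * ln x) with (ln x + ln x + ln x) by ring. rewrite !exp_plus, exp_ln; auto. Qed.

Lemma Rpower_ge1 x a : 1 <= x -> 0 <= a -> 1 <= Rpower x a.
Proof. intros. rewrite <- (Rpower_O x) by lra. apply Rle_Rpower; auto. Qed.

Lemma Rpower_S x a : 0 < x -> Rpower x (a + 1) = Rpower x a * x.
Proof. intros. rewrite Rpower_plus, Rpower_1; auto. Qed.

Lemma bad_bound a d n x0 : 1 < a -> (1 <= d)%nat -> (2 <= n)%nat -> 3 <= ln (T1 a n) ->
  x0 <= ln (T1 a n) -> T1 a n <= INR n ->
  (forall x, x0 <= x -> 8 * Rpower (ln x) (a + 1) + 2 <= x) ->
  prob (traj a d n) (fun tr => ~ good a 24 n tr) <= / (ln (T1 a n) - 1) + 3 * / (T1 a n - 1).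
Proof.
  intros Ha Hd Hn HJ Hx0 HTn Hgr. set (J := ln (T1 a n)) in *. set (T := T1 a n) in *.
  assert (Ha0 : 0 <= a) by lra.
  pose proof (T1_ge4 a n HJ) as HT4. fold T in HT4.
  destruct (nonneg_traj a d n Ha0) as [Hnn _].
  eapply Rle_trans. apply prob_le with (F := fun tr =>
    (exists i, In i (seq 2 (n - 1)) /\ EB a J i tr) \/
    (exists t, In t (seq 2 (n - 1)) /\ (T <= INR t /\ exists c, In c (seq 0 t) /\ EA a J t c tr))); auto.
  { intros tr Htr Hng. apply (decomp a d n tr); auto. }
  eapply Rle_trans. apply prob_or; auto.
  apply Rplus_le_compat.
  -
    eapply Rle_trans. apply prob_union; auto.
    eapply Rle_trans. 2: { apply (tele' J (n - 1)). lra. }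
    apply sumR_le. intros i Hi. apply in_seq in Hi.
    destruct excluded_middle_informative as [HiJ|HiJ].
    + eapply Rle_trans. apply probB; auto; lia.
      assert (Hi3 : (3 <= i)%nat) by (apply INR_ge_nat; simpl; lra).
      assert (Hi0 : 3 <= INR i) by lra.
      pose proof (mu_ge a i Ha0 Hi3) as Hmu. rewrite p_i_inv in Hmu.
      set (P := Rpower (ln (INR i)) a) in *. assert (HP : 0 < P) by apply Rpower_pos.
      assert (Hl : 0 < ln (INR i)) by (apply lnINR_pos; lia).
      specialize (Hgr (INR i) ltac:(lra)). rewrite Rpower_S in Hgr by auto. fold P in Hgr.
      rewrite minus_INR in Hmu by lia. simpl (INR 2) in Hmu.
      assert (Hm : 8 * ln (INR i) <= mu a i).
      { eapply Rle_trans; [|exact Hmu].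
        replace (8 * ln (INR i)) with ((8 * P * ln (INR i)) * / P) by (field; lra).
        apply Rmult_le_compat_r. left; apply Rinv_0_lt_compat; auto. lra. }
      eapply Rle_trans. apply exp_le_mono. instantiate (1 := - (2 * ln (INR i))). lra.
      rewrite exp_m2ln by lra. apply Rinv_le_contravar. nra. nra.
    + rewrite <- (prob_false (traj a d n)). apply prob_le; auto.
      intros tr _ HE. unfold EB in HE. apply HiJ.
      induction tr as [|G r IH]; simpl in HE; [contradiction|].
      destruct HE as [[<- [HB _]]|HE]; auto.
  -
    eapply Rle_trans. apply prob_union; auto.
    eapply Rle_trans with (sumR (fun t => 3 * (if excluded_middle_informative (T <= INR t)
       then / (INR t * (INR t - 1)) else 0)) (seq 2 (n - 1))).
    2: { rewrite sumR_mult. apply Rmult_le_compat_l. lra. apply tele'. lra. }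
    apply sumR_le. intros t Ht. apply in_seq in Ht.
    destruct excluded_middle_informative as [HtT|HtT].
    + eapply Rle_trans. apply prob_le with (F := fun tr => exists c, In c (seq 0 t) /\ EA a J t c tr); auto.
      { intros tr _ [_ H]; auto. }
      eapply Rle_trans. apply prob_union; auto.
      assert (Ht4 : 4 <= INR t) by lra.
      assert (Ht3 : (3 <= t)%nat) by (apply INR_ge_nat; simpl; lra).
      assert (Hl1 : 1 <= ln (INR t)) by (apply ln_INR_ge1; auto).
      assert (HJt : J <= ln (INR t)) by (apply ln_le_mono; [apply Rpower_pos| auto]).
      set (P := Rpower (ln (INR t)) a).
      assert (HP1 : 1 <= P) by (apply Rpower_ge1; lra).
      eapply Rle_trans. apply sumR_le with (g := fun _ => exp (1 - 3 * ln (INR t))).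
      { intros c _. eapply Rle_trans. unfold EA. apply probA; auto; lia.
        apply exp_le_mono. unfold yt. fold P. rewrite Rpower_S by lra. fold P. nra. }
      rewrite sumR_const, length_seq, exp_m3ln by lra.
      pose proof exp_le_3.
      assert (0 < / (INR t * INR t * INR t)) by (apply Rinv_0_lt_compat; nra).
      replace (exp 1 * / (INR t * INR t * INR t) * INR t) with (exp 1 * / (INR t * INR t)) by (field; lra).
      assert (/ (INR t * INR t) <= / (INR t * (INR t - 1))) by (apply Rinv_le_contravar; nra).
      assert (0 < / (INR t * INR t)) by (apply Rinv_0_lt_compat; nra).
      pose proof (exp_pos 1). nra.
    + rewrite Rmult_0_r, <- (prob_false (traj a d n)). apply prob_le; auto. intros tr _ [H _]. auto.
Qed.

Theorem lemma3 (a : R) (d : nat) :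
  1 < a -> (4 <= d)%nat ->
  exists C : R,
    Un_cv (fun n : nat => prob (traj a d n) (good a C n)) 1.
Proof.
  intros Ha Hd. exists 24. intros eps Heps.
  destruct (growth (a + 1) ltac:(lra)) as [x0 [Hx01 Hgr]].
  set (M := 3 + x0 + 8 / eps).
  assert (HM : 0 < M) by (unfold M; assert (0 < 8 / eps) by (apply Rdiv_lt_0_compat; lra); lra).
  set (Z0 := up (exp (exp M))).
  destruct (archimed (exp (exp M))) as [Hup _]. fold Z0 in Hup.
  assert (HZ0 : (0 <= Z0)%Z) by (apply le_IZR; pose proof (exp_pos (exp M)); lra).
  exists (Z.to_nat Z0 + 2)%nat. intros n Hn.
  assert (Hn2 : (2 <= n)%nat) by lia.
  assert (HnR : exp (exp M) < INR n).
  { apply Rlt_le_trans with (IZR Z0); auto. rewrite <- (Z2Nat.id Z0) by auto.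
    rewrite <- INR_IZR_INZ. apply le_INR. lia. }
  assert (Hexp : forall y, 1 + y <= exp y) by apply exp_ineq1_le.
  assert (Hlnn : exp M < ln (INR n)).
  { rewrite <- (ln_exp (exp M)). apply ln_increasing; auto. apply exp_pos. }
  assert (HJ : M <= ln (T1 a n)).
  { unfold T1. rewrite ln_Rpower. assert (M < ln (ln (INR n))).
    { rewrite <- (ln_exp M). apply ln_increasing; auto. apply exp_pos. }
    nra. }
  assert (Hx0n : x0 <= INR n) by (pose proof (Hexp M); pose proof (Hexp (exp M)); unfold M in *;
     assert (0 < 8 / eps) by (apply Rdiv_lt_0_compat; lra); lra).
  assert (HTn : T1 a n <= INR n) by (specialize (Hgr (INR n) Hx0n); fold (T1 a n) in Hgr;
     pose proof (Rpower_pos (ln (INR n)) (a + 1)); unfold T1 in *; lra).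
  assert (H8 : 0 < 8 / eps) by (apply Rdiv_lt_0_compat; lra).
  pose proof (bad_bound a d n x0 Ha ltac:(lia) Hn2 ltac:(unfold M in HJ; lra) ltac:(unfold M in HJ; lra) HTn Hgr) as HB.
  set (J := ln (T1 a n)) in *.
  assert (HT : 1 + J <= T1 a n) by (pose proof (Hexp J); unfold J in *; rewrite exp_ln in H by apply Rpower_pos; auto).
  assert (HJ8 : 8 / eps <= J - 1) by (unfold M in HJ; lra).
  assert (Hi1 : / (J - 1) <= eps / 8).
  { replace (eps / 8) with (/ (8 / eps)) by (field; lra). apply Rinv_le_contravar; lra. }
  assert (Hi2 : / (T1 a n - 1) <= eps / 8).
  { replace (eps / 8) with (/ (8 / eps)) by (field; lra). apply Rinv_le_contravar; lra. }
  pose proof (prob_compl (traj a d n) (good a 24 n)) as Hc. rewrite mass_traj in Hc by lia.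
  assert (H0 : 0 <= prob (traj a d n) (fun x => ~ good a 24 n x)).
  { rewrite prob_Ex. apply Ex_nonneg. apply nonneg_traj; lra. intros; apply ind_nonneg. }
  unfold R_dist. rewrite Rabs_left1 by lra. lra.
Qed.
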